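(* For every $k, \ell \in \mathbb{N}$, $$p_\ell^*(k) \leqslant \left( \frac{e^2 k}{\ell^2} \right)^{\ell}.$$
   Context: $p_\ell^*(k)$ denotes the number of partitions of $k$ into $\ell$ distinct parts, i.e. the number of sets $S \subset \mathbb{N} = \{1,2,\ldots\}$ with $|S| = \ell$ and $\sum_{a \in S} a = k$. *)

(* Defs.v *)
From mathcomp Require Import all_boot.
Set Implicit Arguments. Unset Strict Implicit. Unset Printing Implicit Defensive.

(* p_l^*(k): number of sets S of positive integers with |S| = l and
   sum_{a in S} a = k.  Every such S is contained in {1,...,k}; we encode
   the subsets of {1,...,k} as sets S : {set 'I_k}, where i : 'I_k stands
   for the positive integer i+1. *)
Definition pstar (l k : nat) : nat :=
  #|[set S : {set 'I_k} | (#|S| == l) && (\sum_(i in S) i.+1 == k)]|.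

(* Main.v *)
Require Import Defs.
From Stdlib Require Import Reals Lra Lia Factorial.
From mathcomp Require Import all_boot zify.
Set Implicit Arguments. Unset Strict Implicit. Unset Printing Implicit Defensive.
Definition m N (S : {set 'I_N}) (n : nat) : bool := [exists i in S, val i == n].
Definition sh N (S : {set 'I_N}) : {set 'I_N} := [set i : 'I_N | m S i.+1].
Definition q N l k := #|[set S : {set 'I_N} | (#|S| == l) && (\sum_(i in S) i.+1 == k)]|.

Lemma mE N (S : {set 'I_N}) (i : 'I_N) : m S i = (i \in S).
Proof.
apply/existsP/idP => [[j /andP [jS /eqP/val_inj eji]] | iS]; first by rewrite -eji.
by exists i; rewrite iS eqxx.
Qed.

Lemma m_lt N (S : {set 'I_N}) n : m S n -> n < N.
Proof. by case/existsP => j /andP [_ /eqP <-]; apply: ltn_ord. Qed.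

Lemma msh N (S : {set 'I_N}) n : m (sh S) n = m S n.+1.
Proof.
apply/idP/idP.
  by case/existsP => j /andP []; rewrite inE => h /eqP <-.
move=> h; have hn : n < N by have := m_lt h; lia.
apply/existsP; exists (Ordinal hn); by rewrite inE /= h eqxx.
Qed.

Lemma sumE N (S : {set 'I_N}) (F : nat -> nat) :
  \sum_(i in S) F i = \sum_(i < N) (if m S i then F i else 0).
Proof. rewrite big_mkcond; apply eq_bigr => i _; by rewrite mE. Qed.

Lemma cardE' N (S : {set 'I_N}) : #|S| = \sum_(i < N) (if m S i then 1 else 0).
Proof. by rewrite -sum1_card (sumE S (fun _ => 1)). Qed.

Lemma shA N (S : {set 'I_N}) : #|S| = m S 0 + #|sh S|.
Proof.
rewrite !cardE'; case: N S => [|N] S.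
  by rewrite !big_ord0 /m; case: existsP => // [[[]]].
rewrite big_ord_recl big_ord_recr /=.
have -> : m (sh S) N = false.
  by rewrite msh; case H: (m S N.+1) => //; have := m_lt H; rewrite ltnn.
rewrite addn0; congr (_ + _).
by apply eq_bigr => i _; rewrite msh.
Qed.

Lemma shB N (S : {set 'I_N}) :
  \sum_(i in S) i.+1 = m S 0 + \sum_(i in sh S) i.+1 + #|sh S|.
Proof.
rewrite cardE' !(sumE _ succn); case: N S => [|N] S.
  by rewrite !big_ord0 /m; case: existsP => // [[[]]].
rewrite big_ord_recl !big_ord_recr /=.
have -> : m (sh S) N = false.
  by rewrite msh; case H: (m S N.+1) => //; have := m_lt H; rewrite ltnn.
rewrite !addn0 -addnA -big_split /=; congr (_ + _).
by apply eq_bigr => i _; rewrite msh /bump add1n; case: (m S _) => //=; rewrite addn1.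
Qed.

Lemma sh_inj N (S T : {set 'I_N}) : m S 0 = m T 0 -> sh S = sh T -> S = T.
Proof.
move=> h0 hsh; apply/setP => i; rewrite -!mE; case: i => [[|j] Hj] //=.
by rewrite -!msh hsh.
Qed.

Lemma sum_ge_card N (S : {set 'I_N}) : #|S| <= \sum_(i in S) i.+1.
Proof. by rewrite -sum1_card; apply leq_sum => i _. Qed.

Lemma q_small N l k : k < l -> q N l k = 0.
Proof.
move=> hkl; apply/eqP; rewrite cards_eq0; apply/eqP/setP => S.
rewrite inE in_set0; apply/negbTE/negP => /andP [/eqP hc /eqP hs].
have := sum_ge_card S; lia.
Qed.

Lemma q_rec N l k : 0 < l -> q N l k <= q N l.-1 (k - l) + q N l (k - l).
Proof.
move=> hl.
set F := [set S : {set 'I_N} | (#|S| == l) && (\sum_(i in S) i.+1 == k)].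
have -> : q N l k = #|F| by [].
set Z := [set S : {set 'I_N} | m S 0].
rewrite -(cardsID Z F); apply leq_add.
- rewrite -(card_in_imset (f := @sh N) (D := F :&: Z)).
    apply subset_leq_card; apply/subsetP => _ /imsetP [S HS ->].
    move: HS; rewrite !inE => /andP [/andP [/eqP hc /eqP hs] h0].
    have hA := shA S; have hB := shB S; rewrite h0 /= in hA hB.
    apply/andP; split; apply/eqP.
- move: hc hs hA hB; generalize (\sum_(i in S) i.+1) (\sum_(i in sh S) i.+1) #|S| #|sh S| => a b c d; simpl in *; lia.
- move: hc hs hA hB; generalize (\sum_(i in S) i.+1) (\sum_(i in sh S) i.+1) #|S| #|sh S| => a b c d; simpl in *; lia.
  move=> S T; rewrite !inE => /andP [_ hS] /andP [_ hT]; apply: sh_inj.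
  by rewrite hS hT.
- rewrite -(card_in_imset (f := @sh N) (D := F :\: Z)).
    apply subset_leq_card; apply/subsetP => _ /imsetP [S HS ->].
    move: HS; rewrite !inE => /andP [h0 /andP [/eqP hc /eqP hs]].
    have hA := shA S; have hB := shB S; rewrite (negbTE h0) /= in hA hB.
    apply/andP; split; apply/eqP; move: hc hs hA hB; generalize (\sum_(i in S) i.+1) (\sum_(i in sh S) i.+1) #|S| #|sh S| => a b c d; simpl in *; lia.
  move=> S T; rewrite !inE => /andP [hS _] /andP [hT _]; apply: sh_inj.
  by rewrite (negbTE hS) (negbTE hT).
Qed.

Lemma q0 N n : q N 0 n <= (n == 0).
Proof.
set F := [set S : {set 'I_N} | (#|S| == 0) && (\sum_(i in S) i.+1 == n)].
have -> : q N 0 n = #|F| by [].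
have H : forall S, S \in F -> S = set0 /\ n = 0.
  move=> S; rewrite inE cards_eq0 => /andP [/eqP -> /eqP <-]; by rewrite big_set0.
clearbody F; case: n F H => [|n'] F H.
- apply: leq_trans (subset_leq_card (B:=[set set0]) _) _.
    by apply/subsetP => S /H [-> _]; rewrite inE.
  by rewrite cards1.
- rewrite leqn0 cards_eq0; apply/eqP/setP => S; rewrite in_set0.
  by apply/negP => /H [_].
Qed.

Lemma q1 N k : q N 1 k <= 1.
Proof.
elim: k => [|k IH]; first by rewrite q_small.
apply: leq_trans (q_rec N k.+1 (ltn0Sn 0)) _.
rewrite subn1 /=; case: k IH => [|k] IH.
  by rewrite (@q_small N 1 0) // addn0; apply: leq_trans (q0 _ _) _.
have := q0 N k.+1; rewrite /= leqn0 => /eqP ->; by [].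
Qed.

Lemma binom_lb x y m : x^m.+1 + m.+1 * y * x^m <= (x + y)^m.+1.
Proof.
elim: m => [|m IH]; first by rewrite !expn1 expn0 mul1n muln1.
rewrite (expnS (x + y)).
apply: leq_trans (leq_mul (leqnn (x + y)) IH).
rewrite !expnS; nia.
Qed.

Lemma qbound N l k : 0 < l -> q N l k * (l`! * l.-1`!) <= k ^ l.-1.
Proof.
elim: l k => [//|l IHl] k _.
case: l IHl => [|l] IHl.
  by rewrite /= !muln1 expn0; apply: q1.
elim/ltn_ind: k => k IHk.
case: (ltnP k l.+2) => hk; first by rewrite q_small.
have hr := q_rec N k (ltn0Sn l.+1).
have h1 := IHl (k - l.+2) (ltn0Sn l).
have h2 := IHk (k - l.+2) (ltac:(lia)) .
have hb := binom_lb (k - l.+2) l.+2 l.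
move: hr; generalize (q N l.+2 k) => a hr.
have -> : k = (k - l.+2) + l.+2 by lia.
move: hr h1 h2 hb; rewrite /= !factS.
generalize (k - l.+2) => x.
rewrite !expnS.
generalize (q N l.+1 x) (q N l.+2 x) l`! (x ^ l) ((x + l.+2) ^ l) => b c f xl yl.
move=> hr h1 h2 hb.
apply: leq_trans (leq_mul hr (leqnn _)) _.
rewrite mulnDl.
apply: leq_trans hb; rewrite addnC; apply: leq_add => //.
have -> : b * (l.+2 * (l.+1 * f) * (l.+1 * f)) = (l.+1 * l.+2) * (b * (l.+1 * f * f)) by rewrite !mulnA; nia.
by apply: leq_mul.
Qed.

Lemma pstar_nat l k : pstar l k * (l`! * l`!) <= k ^ l.
Proof.
have -> : pstar l k = q k l k by [].
case: l => [|l].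
  by rewrite /= muln1 expn0; apply: leq_trans (q0 _ _) _; case: (k == 0).
case: (ltnP k l.+1) => hk; first by rewrite q_small.
have h := qbound k k (ltn0Sn l); rewrite /= in h.
rewrite factS expnS; rewrite factS in h.
move: h hk; generalize (q k l.+1 k) (k ^ l) l`! => a b f h hk.
apply: (@leq_trans (l.+1 * b)); last by apply: leq_mul.
have -> : a * (l.+1 * f * (l.+1 * f)) = l.+1 * (a * (l.+1 * f * f)) by rewrite !mulnA; nia.
by apply: leq_mul.
Qed.

Lemma expn_pow k l : expn k l = Nat.pow k l.
Proof. elim: l => [//|l IH]; by rewrite expnS IH. Qed.

Lemma fact_eq l : l`! = fact l.
Proof. elim: l => [//|l IH]; by rewrite factS IH. Qed.

Open Scope R_scope.

Lemma exp_pow' (x : R) (n : nat) : exp x ^ n = exp (INR n * x).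
Proof.
elim: n => [|n IH].
- by rewrite /= Rmult_0_l exp_0.
- rewrite -tech_pow_Rmult IH -exp_plus S_INR; f_equal; ring.
Qed.

Lemma step (l : nat) : (INR l + 1) ^ l <= exp 1 * INR l ^ l.
Proof.
case: l => [|l0].
- simpl. have := exp_ineq1_le 1; lra.
- set n := S l0.
  have hn : 0 < INR n by apply lt_0_INR; rewrite /n; lia.
  have h1 : INR n + 1 <= INR n * exp (/ INR n).
    have H := exp_ineq1_le (/ INR n).
    have H2 : INR n * (1 + / INR n) <= INR n * exp (/ INR n) by apply Rmult_le_compat_l; lra.
    by rewrite Rmult_plus_distr_l Rmult_1_r Rinv_r in H2; lra.
  apply Rle_trans with ((INR n * exp (/ INR n)) ^ n).
  + apply pow_incr; lra.
  + rewrite Rpow_mult_distr exp_pow' Rinv_r; lra.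
Qed.

Lemma stirl (l : nat) : INR l ^ l <= exp 1 ^ l * INR (fact l).
Proof.
elim: l => [|l IH]; first by simpl; lra.
rewrite S_INR -!tech_pow_Rmult fact_simpl mult_INR S_INR.
have hs := step l.
have h0 : 0 <= INR l by apply pos_INR.
have he : 0 < exp 1 by apply exp_pos.
have hp : 0 <= INR l ^ l by apply pow_le.
apply Rle_trans with ((INR l + 1) * (exp 1 * INR l ^ l)).
  apply Rmult_le_compat_l; lra.
have := Rmult_le_compat_l (exp 1 * (INR l + 1)) _ _ ltac:(nra) IH.
nra.
Qed.

Theorem lemma5p1 (k l : nat) :
  INR (pstar l k) <= ((exp 1) ^ 2 * INR k / (INR l) ^ 2) ^ l.
Proof.
have hn := pstar_nat l k.
rewrite expn_pow fact_eq in hn.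
move/leP: hn => hn.
have hR := le_INR _ _ hn.
rewrite !mult_INR pow_INR in hR.
clear hn; case: l hR => [|l] hR.
  simpl in *; lra.
set L := S l in hR *.
have hL : 0 < INR L by apply lt_0_INR; rewrite /L; lia.
have hst := stirl L.
have hF : 0 < INR (fact L) by apply lt_0_INR, lt_O_fact.
have hp : 0 <= INR (pstar L k) by apply pos_INR.
have hE : 0 < exp 1 ^ L by apply pow_lt, exp_pos.
have hLL : 0 < INR L ^ L by apply pow_lt.
have -> : (exp 1 ^ 2 * INR k / INR L ^ 2) ^ L
          = (exp 1 ^ L) * (exp 1 ^ L) * INR k ^ L / (INR L ^ L * INR L ^ L).
  have e2 : forall x : R, x ^ 2 = x * x by move=> x; simpl; ring.
  rewrite !e2 /Rdiv !Rpow_mult_distr pow_inv Rpow_mult_distr Rinv_mult; ring.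
apply Rmult_le_reg_r with (INR L ^ L * INR L ^ L); first nra.
rewrite /Rdiv Rmult_assoc Rinv_l; last nra.
rewrite Rmult_1_r.
have h2 : INR L ^ L * INR L ^ L <= exp 1 ^ L * exp 1 ^ L * (INR (fact L) * INR (fact L)).
  have := Rmult_le_compat (INR L ^ L) _ (INR L ^ L) _ ltac:(lra) ltac:(lra) hst hst; lra.
apply Rle_trans with (INR (pstar L k) * (exp 1 ^ L * exp 1 ^ L * (INR (fact L) * INR (fact L)))).
  apply Rmult_le_compat_l; lra.
have := Rmult_le_compat_l (exp 1 ^ L * exp 1 ^ L) _ _ ltac:(nra) hR; nra.
Qed.
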